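(* For any integer $k\ge1$, no online algorithm achieves a competitive ratio better than $2\ln2$ for the online ATWC dispersion problem without boundary condition for arbitrary $k$-dimensional polytopes; i.e., there is no online algorithm that is $\sigma$-competitive with $\sigma<2\ln2$ for every $k$-dimensional polytope $P$.
   Context: Distances are Euclidean. For a polytope $P$ and $n\ge2$, $SP(n;P)=\max_{X_1,\dots,X_n\in P}\min_{i\ne j}dis(X_i,X_j)$. An instance is $S=((s_1,d_1),\dots,(s_n,d_n))$ with $s_i<d_i$, $0=s_1\le\dots\le s_n$; point $i$ is present at time $t$ iff $s_i\le t\le d_i$; $T=\max_id_i$. For $X\in P^n$, $d^{SP}_{min}(t;X)=\min dis(X_i,X_j)$ over present points $i\ne j$ at time $t$, and $OPT^{SP}_A(S;P)=\max_X\min_{t\le T}d^{SP}_{min}(t;X)$. In the online problem, upon arrival of each point the algorithm irrevocably chooses its location in $P$ without knowing future events or the number of points; an adaptive adversary chooses the events. An online algorithm is $\sigma$-competitive for $P$ if $OPT^{SP}_A(S;P)\le\sigma\min_{t\le T}d^{SP}_{min}(t;X)$ for every instance $S$ and its output $X$. *)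

(* Defs.v *)
From HB Require Import structures.
From mathcomp Require Import all_boot all_order all_algebra.
From mathcomp Require Import all_classical all_reals all_analysis.
Set Implicit Arguments. Unset Strict Implicit. Unset Printing Implicit Defensive.
Import Order.TTheory GRing.Theory Num.Theory.
Local Open Scope classical_set_scope.
Local Open Scope ring_scope.

Section Dispersion.
Variables (R : realType) (k : nat).

Definition edist (x y : 'rV[R]_k) : R :=
  Num.sqrt (\sum_(i < k) (x ord0 i - y ord0 i) ^+ 2).

Definition hull (V : seq 'rV[R]_k) : set 'rV[R]_k :=
  [set x | exists w : 'I_(size V) -> R,
     (forall i, 0 <= w i) /\ \sum_i w i = 1 /\
     x = \sum_i w i *: nth 0 V i].

(* conv(V) is k-dimensional (full-dimensional in R^k): it contains a ball *)
Definition full_dim (V : seq 'rV[R]_k) : Prop :=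
  exists (c : 'rV[R]_k) (r : R), 0 < r /\
    forall x, edist x c < r -> hull V x.

Definition instance := seq (R * R).
Definition arr (S : instance) (i : nat) : R := (nth (0, 0) S i).1.
Definition dep (S : instance) (i : nat) : R := (nth (0, 0) S i).2.

Definition valid_instance (S : instance) : Prop :=
  (2 <= size S)%N /\ arr S 0 = 0 /\
  (forall i, (i < size S)%N -> arr S i < dep S i) /\
  (forall i j, (i <= j)%N -> (j < size S)%N -> arr S i <= arr S j).

Definition horizon (S : instance) : R := \big[Num.max/0]_(i < size S) dep S i.

Definition present (S : instance) (i : nat) (t : R) : bool :=
  (arr S i <= t) && (t <= dep S i).

(* d^SP_min(t;X): min over present pairs (+oo if fewer than two present) *)
Definition dmin (S : instance) (X : 'I_(size S) -> 'rV[R]_k) (t : R) : \bar R :=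
  \big[Order.min/+oo%E]_(i < size S)
    \big[Order.min/+oo%E]_(j < size S | (i != j) && present S i t && present S j t)
       (edist (X i) (X j))%:E.

Arguments dmin : clear implicits.

Definition objective (S : instance) (X : 'I_(size S) -> 'rV[R]_k) : \bar R :=
  ereal_inf [set dmin S X t | t in [set t : R | t <= horizon S]].

Arguments objective : clear implicits.

Definition OPT (S : instance) (P : set 'rV[R]_k) : \bar R :=
  ereal_sup [set objective S X |
     X in [set X : 'I_(size S) -> 'rV[R]_k | forall i, P (X i)]].

(* Information available to the online algorithm when point i arrives:
   the arrival times s_0..s_i, and for each earlier point j < i its
   departure time if it has already occurred (d_j <= s_i), else None.
   Neither the future events nor the number of points n are revealed. *)
Definition history (S : instance) (i : nat) : seq (R * option R) :=
  [seq (arr S j, if (j < i)%N && (dep S j <= arr S i) then Some (dep S j) else None)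
  | j <- iota 0 i.+1].

Definition online_alg (P : set 'rV[R]_k) (alg : instance -> nat -> 'rV[R]_k) : Prop :=
  (forall S i, (i < size S)%N -> P (alg S i)) /\
  (forall S S' i, (i < size S)%N -> (i < size S')%N ->
     history S i = history S' i -> alg S i = alg S' i).

Definition output (alg : instance -> nat -> 'rV[R]_k) (S : instance)
  : 'I_(size S) -> 'rV[R]_k := fun i => alg S i.

Arguments output : clear implicits.

Definition competitive (P : set 'rV[R]_k) (alg : instance -> nat -> 'rV[R]_k)
  (sigma : R) : Prop :=
  forall S, valid_instance S ->
    (OPT S P <= sigma%:E * objective S (output alg S))%E.

End Dispersion.

(* Main.v *)
Require Import Defs.
Set Warnings "-all".
From HB Require Import structures.
From mathcomp Require Import all_boot all_order all_algebra.
From mathcomp Require Import zify ring lra.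
From mathcomp Require Import all_classical all_reals all_analysis.
Import Order.TTheory GRing.Theory Num.Theory.
Local Open Scope ring_scope.
Require Import Defs.
Section Geo.
Variable R : realType.

Lemma coord_le_edist (k : nat) (x y : 'rV[R]_k) (i : 'I_k) :
  `|x ord0 i - y ord0 i| <= edist x y.
Proof.
rewrite /edist -sqrtr_sqr ler_sqrt; last by apply: sumr_ge0 => l _; exact: sqr_ge0.
rewrite (bigD1 i) //= lerDl; apply: sumr_ge0 => l _; exact: sqr_ge0.
Qed.

Lemma edist_ge0 (k : nat) (x y : 'rV[R]_k) : 0 <= edist x y.
Proof. exact: sqrtr_ge0. Qed.

Lemma edist_le (k' : nat) (x y : 'rV[R]_k'.+1) (eps eta : R) :
  0 <= eta -> k'%:R * eps ^+ 2 <= eta ^+ 2 ->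
  (forall i : 'I_k', 0 <= x ord0 (lift ord0 i) <= eps) ->
  (forall i : 'I_k', 0 <= y ord0 (lift ord0 i) <= eps) ->
  edist x y <= `|x ord0 ord0 - y ord0 ord0| + eta.
Proof.
move=> eta0 hk hx hy.
have p0 : 0 <= `|x ord0 ord0 - y ord0 ord0| + eta by rewrite addr_ge0.
rewrite /edist -[X in _ <= X]ger0_norm // -sqrtr_sqr ler_sqrt; last exact: sqr_ge0.
rewrite big_ord_recl.
have hs : \sum_(i < k') (x ord0 (lift ord0 i) - y ord0 (lift ord0 i)) ^+ 2 <= k'%:R * eps ^+ 2.
  apply: (@le_trans _ _ (\sum_(i < k') eps ^+ 2)).
    apply: ler_sum => i _.
    have := hx i; have := hy i; move=> /andP[? ?] /andP[? ?]; nra.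
  by rewrite sumr_const card_ord mulr_natl.
set d := x ord0 ord0 - y ord0 ord0.
have : `|d| ^+ 2 = d ^+ 2 by rewrite real_normK // num_real.
have : 0 <= `|d| by [].
move=> ? ?; nra.
Qed.

Lemma hull_coord (k : nat) (V : seq 'rV[R]_k) (i : 'I_k) (b : R) x :
  (forall v, v \in V -> 0 <= v ord0 i <= b) -> hull V x -> 0 <= x ord0 i <= b.
Proof.
move=> hV [w [w0 [w1 ->]]].
rewrite summxE; apply/andP; split.
  apply: sumr_ge0 => j _; rewrite mxE; apply: mulr_ge0 => //.
  by have /andP[] := hV _ (mem_nth 0 (ltn_ord j)).
apply: (@le_trans _ _ (\sum_j w j * b)).
  apply: ler_sum => j _; rewrite mxE; apply: ler_wpM2l => //.
  by have /andP[] := hV _ (mem_nth 0 (ltn_ord j)).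
by rewrite -mulr_suml w1 mul1r.
Qed.

Lemma hull_nat (k : nat) (V : seq 'rV[R]_k) x (W : nat -> R) :
  (forall j, (j < size V)%N -> 0 <= W j) ->
  \sum_(0 <= j < size V) W j = 1 ->
  x = \sum_(0 <= j < size V) W j *: nth 0 V j -> hull V x.
Proof.
move=> W0 W1 Wx; rewrite /hull /=; exists (fun j : 'I_(size V) => W j).
split; first by move=> j; exact: W0.
by rewrite -!(big_mkord xpredT (fun j => W j)) -(big_mkord xpredT (fun j => W j *: nth 0 V j)).
Qed.

End Geo.
Lemma sum_eq_p (n p : nat) : (\sum_(0 <= k < n) (k == p : nat) <= 1)%N.
Proof.
elim: n => [|n IH]; first by rewrite big_geq.
rewrite big_nat_recr //=.
have [->|] := eqVneq n p.
  have -> : \sum_(0 <= k < p) (k == p : nat) = 0%N.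
    by rewrite big_nat_cond big1 // => k /andP[/andP[_ kp] _]; rewrite (ltn_eqF kp).
  by [].
by move=> _; rewrite addn0.
Qed.

Lemma sum_eqS_p (n p : nat) : (\sum_(0 <= k < n) (k.+1 == p : nat) <= 1)%N.
Proof.
elim: n => [|n IH]; first by rewrite big_geq.
rewrite big_nat_recr //=.
have [<-|] := eqVneq n.+1 p.
  have -> : \sum_(0 <= k < n) (k.+1 == n.+1 : nat) = 0%N.
    by rewrite big_nat_cond big1 // => k /andP[/andP[_ kp] _]; rewrite eqSS (ltn_eqF kp).
  by [].
by move=> _; rewrite addn0.
Qed.

Lemma gap_lemma (R : realFieldType) (N : nat) (y h : nat -> R) :
  (forall a b, (a <= b)%N -> h b <= h a) ->
  (forall i, (i < (2*N).+1)%N -> 0 <= y i <= 1) ->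
  (forall i j, (i < (2*N).+1)%N -> (j < (2*N).+1)%N -> i != j ->
      h (maxn i j) <= `|y i - y j|) ->
  2 * \sum_(N.+1 <= a < (2*N).+1) h a <= 1.
Proof.
move=> hmono y01 hgap.
set M := (2*N).+1.
pose r := fun i j => y i <= y j.
pose s := sort r (iota 0 M).
have ps : perm_eq s (iota 0 M) by rewrite perm_sort.
have us : uniq s by rewrite (perm_uniq ps) iota_uniq.
have ss : size s = M by rewrite size_sort size_iota.
have mems : forall k, (k < M)%N -> (nth 0%N s k < M)%N.
  move=> k kM.
  have : nth 0%N s k \in iota 0 M by rewrite -(perm_mem ps) mem_nth // ss.
  by rewrite mem_iota.
have srt : sorted r s.
  apply: sort_sorted => i j; rewrite /r; exact: le_total.
pose m := fun k => maxn (nth 0%N s k) (nth 0%N s k.+1).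
have mM : forall k, (k < 2 * N)%N -> (m k < M)%N.
  by move=> k kN; rewrite /m gtn_max !mems // /M; lia.
have step1 : \sum_(0 <= k < 2 * N) h (m k) <= 1.
  apply: (@le_trans _ _ (\sum_(0 <= k < 2 * N) (y (nth 0%N s k.+1) - y (nth 0%N s k)))).
    rewrite big_nat_cond [X in _ <= X]big_nat_cond; apply: ler_sum => k /andP[/andP[_ kN] _].
    have kS : (k.+1 < size s)%N by rewrite ss /M; lia.
    have le := (sortedP 0%N srt) k kS.
    have ne : nth 0%N s k != nth 0%N s k.+1.
      by rewrite nth_uniq // ?ss /M; lia.
    have := hgap _ _ (mems k ltac:(lia)) (mems k.+1 ltac:(lia)) ne.
    by rewrite distrC ger0_norm // subr_ge0.
  rewrite (telescope_sumr (fun k => y (nth 0%N s k))) //.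
  have := y01 _ (mems (2 * N)%N ltac:(lia)); have := y01 _ (mems 0%N ltac:(lia)).
  move=> /andP[? ?] /andP[? ?]; lra.
pose c := fun a => \sum_(0 <= k < 2 * N) ((m k == a)%:R : R).
have step2 : \sum_(0 <= k < 2 * N) h (m k) = \sum_(0 <= a < M) c a * h a.
  have e : forall k, (k < 2 * N)%N ->
      h (m k) = \sum_(0 <= a < M) ((m k == a)%:R * h a).
    move=> k kN.
    rewrite (bigD1_seq (m k)) /= ?mem_iota ?iota_uniq ?mM //.
    rewrite eqxx mul1r big1 ?addr0 // => a /negPf; rewrite eq_sym => ->.
    by rewrite mul0r.
  rewrite big_nat_cond (eq_bigr (fun k => \sum_(0 <= a < M) ((m k == a)%:R * h a))); last first.
    by move=> k /andP[/andP[_ kN] _]; rewrite e.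
  rewrite -big_nat_cond exchange_big /=; apply: eq_bigr => a _.
  by rewrite /c mulr_suml.
have step3 : forall a, c a <= 2.
  move=> a; rewrite /c -natr_sum (ler_nat R _ 2).
  pose p := index a s.
  apply: (@leq_trans (\sum_(0 <= k < 2 * N) ((k == p : nat) + (k.+1 == p : nat)))).
    rewrite big_nat_cond [X in (_ <= X)%N]big_nat_cond.
    apply: leq_sum => k /andP[/andP[_ kN] _].
    case: eqP => // ma.
    have : (nth 0%N s k == a) || (nth 0%N s k.+1 == a).
      move: ma; rewrite /m /maxn; case: ltnP => _ ->; by rewrite eqxx ?orbT.
    case/orP => /eqP ea; rewrite /p -ea index_uniq ?ss /M ?eqxx //; lia.
  rewrite big_split /=.
  have := sum_eq_p (2 * N) p; have := sum_eqS_p (2 * N) p; lia.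
have step4 : \sum_(0 <= a < M) c a = (2 * N)%:R.
  rewrite /c exchange_big /=.
  rewrite big_nat_cond (eq_bigr (fun _ => 1)); last first.
    move=> k /andP[/andP[_ kN] _].
    rewrite (bigD1_seq (m k)) /= ?mem_iota ?iota_uniq ?mM //.
    rewrite eqxx big1 ?addr0 // => a /negPf; rewrite eq_sym => ->. by [].
  by rewrite -big_nat_cond sumr_const_nat subn0.
pose cs := fun a : nat => if (N < a)%N then 2 else 0 : R.
have step5 : \sum_(0 <= a < M) cs a = (2 * N)%:R.
  rewrite (big_cat_nat (n := N.+1)) //=; last by rewrite /M; lia.
  rewrite big_nat_cond big1; last by move=> a /andP[/andP[_ aN] _]; rewrite /cs ltnNge -ltnS aN.
  rewrite add0r big_nat_cond (eq_bigr (fun _ => 2)); last first.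
    by move=> a /andP[/andP[aN _] _]; rewrite /cs aN.
  rewrite -big_nat_cond sumr_const_nat /M.
  have -> : ((2 * N).+1 - N.+1 = N)%N by lia.
  by rewrite natrM mulr_natr.
have step6 : \sum_(0 <= a < M) cs a * h a = 2 * \sum_(N.+1 <= a < M) h a.
  rewrite (big_cat_nat (n := N.+1)) //=; last by rewrite /M; lia.
  rewrite big_nat_cond big1; last first.
    by move=> a /andP[/andP[_ aN] _]; rewrite /cs ltnNge -ltnS aN mul0r.
  rewrite add0r mulr_sumr big_nat_cond [X in _ = X]big_nat_cond; apply: eq_bigr.
  by move=> a /andP[/andP[aN _] _]; rewrite /cs aN.
have step7 : \sum_(0 <= a < M) cs a * h a <= \sum_(0 <= a < M) c a * h a.
  rewrite -subr_ge0 -sumrB.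
  have -> : \sum_(0 <= a < M) (c a * h a - cs a * h a)
       = \sum_(0 <= a < M) ((c a - cs a) * (h a - h N.+1)) + h N.+1 * (\sum_(0 <= a < M) c a - \sum_(0 <= a < M) cs a).
    rewrite mulrBr !mulr_sumr -!sumrB -big_split /=; apply: eq_bigr => a _; ring.
  rewrite step4 step5 subrr mulr0 addr0.
  apply: sumr_ge0 => a _.
  have c0 : 0 <= c a by apply: sumr_ge0 => k _; exact: ler0n.
  have := step3 a.
  rewrite /cs; case: ltnP => aN c2.
    have := hmono _ _ aN; move=> ?; nra.
  have := hmono _ _ (leq_trans aN (leqnSn N)); move=> ?; nra.
rewrite -step6; apply: (le_trans step7); rewrite -step2; exact: step1.
Qed.
Section Disp.
Variable R : realType.

Definition Sn (n : nat) : instance R := nseq n (0, 1).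

Lemma arr_Sn n j : arr (Sn n) j = 0.
Proof. by rewrite /arr /Sn nth_nseq; case: ifP. Qed.

Lemma dep_Sn n j : (j < n)%N -> dep (Sn n) j = 1.
Proof. by rewrite /dep /Sn nth_nseq => ->. Qed.

Lemma size_Sn n : size (Sn n) = n.
Proof. by rewrite size_nseq. Qed.

Lemma valid_Sn n : (2 <= n)%N -> valid_instance (Sn n).
Proof.
move=> n2; split; first by rewrite size_Sn.
split; first by rewrite arr_Sn.
split; first by move=> i; rewrite size_Sn => /dep_Sn ->; rewrite arr_Sn ltr01.
by move=> i j _ _; rewrite !arr_Sn.
Qed.

Lemma horizon_Sn_ge0 n : 0 <= horizon (Sn n).
Proof.
rewrite /horizon; apply: (big_ind (fun x : R => 0 <= x)) => //.
  by move=> x y x0 _; rewrite le_max x0.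
move=> i _; rewrite /dep /Sn nth_nseq; case: ifP => _ //=; exact: ler01.
Qed.

Lemma present_Sn n i : (i < n)%N -> present (Sn n) i 0.
Proof. by move=> ni; rewrite /present arr_Sn dep_Sn // lexx ler01. Qed.

Lemma history_Sn n m i : (i < n)%N -> (i < m)%N -> history (Sn n) i = history (Sn m) i.
Proof.
move=> ni mi; apply/eq_in_map => j; rewrite mem_iota add0n ltnS => ji.
rewrite !arr_Sn !dep_Sn //; try lia.
Qed.

Lemma objective_ge k (S : instance R) (X : 'I_(size S) -> 'rV[R]_k) (c : R) :
  (forall i j : 'I_(size S), i != j -> c <= edist (X i) (X j)) ->
  (c%:E <= @objective _ _ S X)%E.
Proof.
move=> hc; apply/ereal_infP => _ [t _ <-].
rewrite /dmin; apply: le_bigmin; first exact: leey.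
move=> i _; apply: le_bigmin; first exact: leey.
by move=> j /andP[/andP[ij _] _]; rewrite lee_fin; exact: hc.
Qed.

Lemma objective_le k (S : instance R) (X : 'I_(size S) -> 'rV[R]_k) (i j : 'I_(size S)) :
  i != j -> present S i 0 -> present S j 0 -> 0 <= horizon S ->
  (@objective _ _ S X <= (edist (X i) (X j))%:E)%E.
Proof.
move=> ij pi pj h0; apply: ge_ereal_inf; exists (@dmin _ _ S X 0); first by exists 0.
rewrite /dmin; apply: le_trans (bigmin_le _ i _) _.
by apply: bigmin_le_cond; rewrite ij pi pj.
Qed.

End Disp.
Section Poly.
Variable R : realType.
Variable k' : nat.
Variable eps : R.
Hypothesis eps0 : 0 < eps.
Hypothesis eps1 : eps <= 1.

Definition cf (l : nat) : R := if l == 0%N then 1 else eps.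
Definition gv (l : nat) : 'rV[R]_k'.+1 := cf l *: delta_mx ord0 (inord l).
Definition Vp : seq 'rV[R]_k'.+1 := 0 :: mkseq gv k'.+1.

Lemma cf_gt0 l : 0 < cf l.
Proof. by rewrite /cf; case: eqP. Qed.

Lemma gv_coord l i : gv l ord0 i = cf l * (inord l == i)%:R.
Proof. by rewrite /gv !mxE eqxx /= eq_sym. Qed.

Lemma Vp_size : size Vp = k'.+2.
Proof. by change ((size (mkseq gv k'.+1)).+1 = k'.+2); rewrite size_mkseq. Qed.

Lemma Vp_coord0 v : v \in Vp -> 0 <= v ord0 ord0 <= 1.
Proof.
rewrite inE => /orP[/eqP ->|]; first by rewrite mxE lexx ler01.
rewrite /mkseq => /mapP [l _ ->]; rewrite gv_coord.
have := cf_gt0 l; rewrite /cf; case: (inord l == ord0); case: eqP => _ /=; 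
  rewrite ?mulr1 ?mulr0 ?lexx ?ler01 //; move=> ?; apply/andP; split => //; lra.
Qed.

Lemma Vp_coordS v (i : 'I_k') : v \in Vp -> 0 <= v ord0 (lift ord0 i) <= eps.
Proof.
rewrite inE => /orP[/eqP ->|]; first by rewrite mxE lexx ltW.
rewrite /mkseq => /mapP [l _ ->]; rewrite gv_coord /cf.
case: eqP => [->|_].
  by rewrite (_ : inord 0 = ord0) ?mulr0 ?lexx ?ltW //; apply: val_inj; rewrite /= inordK.
by case: (inord l == _); rewrite ?mulr1 ?mulr0 ?lexx ?ltW.
Qed.

Lemma hull_Vp0 x : hull Vp x -> 0 <= x ord0 ord0 <= 1.
Proof. by apply: hull_coord => v; exact: Vp_coord0. Qed.

Lemma hull_VpS x (i : 'I_k') : hull Vp x -> 0 <= x ord0 (lift ord0 i) <= eps.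
Proof. by apply: hull_coord => v; exact: Vp_coordS. Qed.

Lemma seg_in_hull (t : R) : 0 <= t <= 1 -> hull Vp (t *: gv 0).
Proof.
move=> /andP[t0 t1].
pose W := fun j : nat => if j == 0%N then 1 - t else if j == 1%N then t else 0.
apply: (@hull_nat _ _ _ _ W); rewrite Vp_size.
- by move=> j _; rewrite /W; case: eqP => _; [lra|case: eqP => _ //; lra].
- rewrite !big_nat_recl //= big_nat_cond big1 ?addr0; first by rewrite /W /=; lra.
  by move=> j _; rewrite /W.
- rewrite !big_nat_recl //= big_nat_cond big1 ?addr0; last by move=> j _; rewrite /W /= scale0r.
  by rewrite /W /= scaler0 add0r.
Qed.

Lemma full_dim_Vp : full_dim Vp.
Proof.
pose ka : R := k'.+1%:R.
have ka0 : 0 < ka by rewrite ltr0n.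
pose c0 := eps / (2 * ka).
pose r := eps / (4 * ka).
have c0r : c0 = 2 * r by rewrite /c0 /r; field; rewrite gt_eqF.
have r0 : 0 < r by rewrite /r divr_gt0 // mulr_gt0.
have rk : r * ka * 4 = eps by rewrite /r; field; rewrite gt_eqF.
exists (const_mx c0), r; split => // x hx.
have hc : forall i, r < x ord0 i < 3 * r.
  move=> i; have := le_lt_trans (@coord_le_edist R _ x (const_mx c0) i) hx.
  rewrite mxE c0r => /ltr_normlP [h1 h2]; apply/andP; split; lra.
pose Wp := fun l : nat => x ord0 (inord l) / cf l.
pose W := fun j : nat => if j is l.+1 then Wp l else 1 - \sum_(0 <= l < k'.+1) Wp l.
have Wp0 : forall l, 0 <= Wp l.
  move=> l; rewrite /Wp divr_ge0 ?ltW ?cf_gt0 //.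
  by have /andP[h _] := hc (inord l); lra.
have Wp3 : forall l, Wp l <= 3 / (4 * ka).
  move=> l; rewrite /Wp ler_pdivrMr ?cf_gt0 //.
  have /andP[_ h] := hc (inord l).
  have e3 : 3 / (4 * ka) = 3 * r / eps by rewrite /r; field; rewrite !gt_eqF.
  rewrite e3 /cf; case: eqP => _.
    rewrite mulr1; apply: (le_trans (ltW h)); rewrite ler_pdivlMr //; apply: ler_piMr => //; lra.
  by rewrite divfK ?gt_eqF // ltW.
have sumW : \sum_(0 <= l < k'.+1) Wp l <= 3 / 4.
  apply: (@le_trans _ _ (\sum_(0 <= l < k'.+1) (3 / (4 * ka)))).
    by apply: ler_sum => l _; exact: Wp3.
  rewrite sumr_const_nat subn0.
  have -> : (3 / (4 * ka)) *+ k'.+1 = 3 / 4.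
    by rewrite -mulr_natr -/ka; field; rewrite gt_eqF.
  by [].
apply: (@hull_nat _ _ _ _ W); rewrite Vp_size.
- by move=> [|j] _ //=; lra.
- rewrite big_nat_recl //= /W; lra.
- rewrite big_nat_recl //= scaler0 add0r.
  apply/rowP => i; rewrite summxE.
  rewrite (eq_big_nat _ _ (F2 := fun l => Wp l * (cf l * (inord l == i)%:R))); last first.
    by move=> l /andP[_ lk]; rewrite mxE /= nth_mkseq // gv_coord.
  rewrite (big_mkord xpredT (fun l => Wp l * (cf l * (inord l == i)%:R))).
  rewrite (bigD1 i) //= big1 ?addr0; last first.
    by move=> j /negPf nji; rewrite inord_val nji mulr0 mulr0.
  by rewrite inord_val eqxx mulr1 /Wp inord_val divfK // gt_eqF // cf_gt0.
Qed.

Lemma OPT_Sn n : (2 <= n)%N -> (((n.-1)%:R)^-1%:E <= OPT (Sn R n) (hull Vp))%E.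
Proof.
move=> n2.
have n1 : (0 : R) < (n.-1)%:R by rewrite ltr0n; lia.
pose Y := fun i : 'I_(size (Sn R n)) => ((i : nat)%:R / (n.-1)%:R) *: gv 0.
apply: le_ereal_sup_tmp; exists (@objective _ _ (Sn R n) Y).
  exists Y => // i; apply: seg_in_hull; rewrite divr_ge0 ?ler0n //=.
  rewrite ler_pdivrMr // mul1r ler_nat; have := ltn_ord i; have := size_Sn R n; lia.
have hY : forall t : R, (t *: gv 0) ord0 ord0 = t.
  move=> t; rewrite [LHS]mxE gv_coord /cf /= (_ : inord 0 = ord0) ?eqxx ?mulr1 //.
  by apply: val_inj; rewrite /= inordK.
apply: objective_ge => i j ij.
apply: le_trans (@coord_le_edist R _ (Y i) (Y j) ord0).
rewrite /Y !hY -mulrBl normrM [`|_^-1|]ger0_norm ?invr_ge0 ?ler0n // ler_peMl ?invr_ge0 ?ler0n //.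
have : (i : nat) != j by [].
case: (ltngtP i j) => // h _.
  rewrite distrC ger0_norm ?subr_ge0 ?ler_nat ?(ltnW h) //.
  have : ((i : nat)%:R + 1 : R) <= (j : nat)%:R by rewrite natr1 ler_nat.
  lra.
rewrite ger0_norm ?subr_ge0 ?ler_nat ?(ltnW h) //.
have : ((j : nat)%:R + 1 : R) <= (i : nat)%:R by rewrite natr1 ler_nat.
lra.
Qed.

Lemma core (alg : instance R -> nat -> 'rV[R]_k'.+1) (sigma : R) (N : nat) (eta : R) :
  (1 <= N)%N -> 0 <= eta -> k'%:R * eps ^+ 2 <= eta ^+ 2 ->
  online_alg (hull Vp) alg -> competitive (hull Vp) alg sigma ->
  0 < sigma /\
  2 * \sum_(N.+1 <= a < (2 * N).+1) (a%:R : R)^-1 <= sigma * (1 + 2 * N%:R * eta).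
Proof.
move=> N1 eta0 keps [onl1 onl2] comp.
pose M := (2 * N).+1.
pose x := fun i => alg (Sn R M) i.
have hx : forall i, (i < M)%N -> hull Vp (x i).
  by move=> i iM; apply: onl1; rewrite size_Sn.
have key : forall i j, (i < M)%N -> (j < M)%N -> i != j ->
    ((maxn i j)%:R)^-1 <= sigma * edist (x i) (x j).
  move=> i j iM jM ij.
  pose n := (maxn i j).+1.
  have n2 : (2 <= n)%N by rewrite /n; move: ij => /eqP; lia.
  have nM : (n <= M)%N by rewrite /n gtn_max iM jM.
  have hc := comp _ (valid_Sn R n n2).
  have hO := OPT_Sn n n2.
  have iS : (i < size (Sn R n))%N by rewrite size_Sn /n ltnS leq_maxl.
  have jS : (j < size (Sn R n))%N by rewrite size_Sn /n ltnS leq_maxr.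
  pose oi := Ordinal iS; pose oj := Ordinal jS.
  have oij : oi != oj by [].
  have hob := @objective_le R _ (Sn R n) (output alg (S:=Sn R n)) oi oj oij
    (present_Sn R n i ltac:(rewrite /n; lia)) (present_Sn R n j ltac:(rewrite /n; lia)) (horizon_Sn_ge0 R n).
  have iM' : (i < size (Sn R M))%N by rewrite size_Sn.
  have jM' : (j < size (Sn R M))%N by rewrite size_Sn.
  have e1 : output alg oi = x i.
    rewrite /output /x; apply: (onl2 _ _ _ iS iM').
    apply: (@history_Sn R); rewrite /n /M; lia.
  have e2 : output alg oj = x j.
    rewrite /output /x; apply: (onl2 _ _ _ jS jM').
    apply: (@history_Sn R); rewrite /n /M; lia.
  rewrite e1 e2 in hob.
  have ob0 := @objective_ge R _ (Sn R n) (output alg (S:=Sn R n)) 0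
    (fun i j _ => edist_ge0 R _ _ _).
  have hOPT := le_trans hO hc.
  rewrite /n /= in hOPT.
  have [s0|s0] := leP 0 sigma.
    have := le_trans hOPT (lee_wpmul2l (x := sigma%:E) ltac:(by rewrite lee_fin) hob).
    by rewrite -EFinM lee_fin.
  exfalso.
  have := le_trans hOPT (mule_le0_ge0 (x := sigma%:E) ltac:(by rewrite lee_fin ltW) ob0).
  rewrite lee_fin leNgt => /negP; apply.
  by rewrite invr_gt0 ltr0n; move: ij => /eqP; lia.
have s0 : 0 < sigma.
  have := key 0%N 1%N ltac:(rewrite /M; lia) ltac:(rewrite /M; lia) isT.
  rewrite /= invr1 => h.
  have := edist_ge0 R _ (x 0%N) (x 1%N).
  move=> ?; rewrite ltNge; apply/negP => s0; nra.
split => //.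
pose y := fun i => x i ord0 ord0.
pose h := fun a : nat => ((maxn a 1)%:R : R)^-1 / sigma - eta.
have hmono : forall a b, (a <= b)%N -> h b <= h a.
  move=> a b ab; rewrite /h lerD2r ler_pM2r ?invr_gt0 //.
  rewrite lef_pV2 ?posrE ?ltr0n ?ler_nat; lia.
have y01 : forall i, (i < M)%N -> 0 <= y i <= 1.
  by move=> i iM; apply: hull_Vp0; exact: hx.
have hgap : forall i j, (i < M)%N -> (j < M)%N -> i != j ->
    h (maxn i j) <= `|y i - y j|.
  move=> i j iM jM ij.
  have k1 := key i j iM jM ij.
  have e := @edist_le R k' (x i) (x j) eps eta eta0 keps
    (fun l => @hull_VpS (x i) l (hx i iM)) (fun l => @hull_VpS (x j) l (hx j jM)).
  rewrite /h (_ : maxn (maxn i j) 1 = maxn i j); last by move: ij => /eqP; lia.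
  rewrite lerBlDr ler_pdivrMr //.
  apply: (le_trans k1); rewrite mulrC; apply: ler_wpM2r; first exact: ltW.
  exact: e.
have gl := @gap_lemma R N y h hmono y01 hgap.
have es : \sum_(N.+1 <= a < (2 * N).+1) ((maxn a 1)%:R : R)^-1
    = \sum_(N.+1 <= a < (2 * N).+1) (a%:R : R)^-1.
  rewrite big_nat_cond [in RHS]big_nat_cond; apply: eq_bigr => a /andP[/andP[aN _] _].
  by rewrite (_ : maxn a 1 = a) //; lia.
have eh : \sum_(N.+1 <= a < (2 * N).+1) h a
    = (\sum_(N.+1 <= a < (2 * N).+1) (a%:R : R)^-1) / sigma - N%:R * eta.
  rewrite /h sumrB -mulr_suml sumr_const_nat es.
  have -> : ((2 * N).+1 - N.+1 = N)%N by lia.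
  by rewrite mulr_natl.
rewrite eh in gl.
set H := \sum_(N.+1 <= a < (2 * N).+1) (a%:R : R)^-1 in gl *.
have eH : H = H / sigma * sigma by rewrite divfK // gt_eqF.
set u := H / sigma in gl eH.
rewrite eH.
have : 0 <= (1 - 2 * (u - N%:R * eta)) * sigma by apply: mulr_ge0; lra.
nra.
Qed.
End Poly.
Lemma ln_step (R : realType) (a : nat) : (0 < a)%N ->
  ln (a.+1%:R : R) - ln (a%:R) <= (a%:R)^-1.
Proof.
move=> a0.
have ap : (0 : R) < a%:R by rewrite ltr0n.
have e : (a.+1%:R : R) = a%:R * (1 + (a%:R)^-1).
  by rewrite mulrDr mulr1 mulfV ?gt_eqF // -natr1.
have p1 : 0 < 1 + (a%:R : R)^-1 by rewrite addr_gt0 ?invr_gt0.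
rewrite e lnM ?posrE ?p1 //.
rewrite addrC addKr; apply: le_ln1Dx.
have : 0 < (a%:R : R)^-1 by rewrite invr_gt0.
lra.
Qed.

Lemma harm (R : realType) (N : nat) : (1 <= N)%N ->
  ln (2 : R) - ((2 * N).+1%:R)^-1 <= \sum_(N.+1 <= a < (2 * N).+1) (a%:R : R)^-1.
Proof.
move=> N1.
have hs : ln ((2 * N).+1%:R : R) - ln (N.+1%:R) <= \sum_(N.+1 <= a < (2 * N).+1) (a%:R : R)^-1.
  rewrite -(telescope_sumr (fun a => ln (a%:R : R))); last by lia.
  rewrite big_nat_cond [X in _ <= X]big_nat_cond; apply: ler_sum => a /andP[/andP[aN _] _].
  apply: ln_step; lia.
have h2 : ln (((2 * N).+1).+1%:R : R) - ln ((2 * N).+1%:R) <= ((2 * N).+1%:R)^-1.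
  by apply: ln_step.
have e2 : ln (((2 * N).+1).+1%:R : R) = ln 2 + ln (N.+1%:R).
  rewrite -lnM ?posrE ?ltr0n //; congr ln.
  by rewrite -natrM; congr (_%:R); lia.
apply: le_trans hs.
have -> : ln (2:R) = ln (((2*N).+1).+1%:R) - ln (N.+1%:R) by rewrite e2 addrK.
move: h2; set u := ln _; set v := ln _; set w := ln _; set q := _^-1; lra.
Qed.

Theorem theorem9 (R : realType) (k : nat) (hk : (1 <= k)%N) (sigma : R)
  (hsigma : sigma < 2 * ln 2) :
  ~ exists alg : seq 'rV[R]_k -> instance R -> nat -> 'rV[R]_k,
      forall V : seq 'rV[R]_k, full_dim V ->
        online_alg (hull V) (alg V) /\ competitive (hull V) (alg V) sigma.
Proof.
case=> alg H.
case: k hk alg H => [//|k'] _ alg H.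
pose ka : R := k'.+1%:R.
have ka1 : 1 <= ka by rewrite ler1n.
have ka0 : 0 < ka by apply: lt_le_trans ltr01 ka1.
have app : forall (N : nat) (eta : R), (1 <= N)%N -> 0 < eta -> eta <= 1 ->
   0 < sigma /\ 2 * \sum_(N.+1 <= a < (2 * N).+1) (a%:R : R)^-1
                <= sigma * (1 + 2 * N%:R * eta).
  move=> N eta N1 e0 e1.
  pose eps := eta / ka.
  have eps0 : 0 < eps by rewrite divr_gt0.
  have epsk : eps * ka = eta by rewrite divfK // gt_eqF.
  have eps1 : eps <= 1.
    have : 0 <= eps * (ka - 1) by apply: mulr_ge0; [exact: ltW|lra].
    nra.
  have keps : k'%:R * eps ^+ 2 <= eta ^+ 2.
    have kk : (k'%:R : R) <= ka by rewrite ler_nat.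
    have e2 : eta ^+ 2 = eps ^+ 2 * (ka * ka) by rewrite -epsk; ring.
    rewrite e2.
    have : 0 <= eps ^+ 2 by exact: sqr_ge0.
    move=> ?; nra.
  have [onl comp] := H (Vp R k' eps) (full_dim_Vp R k' eps eps0 eps1).
  exact: (core R k' eps eps0 eps1 (alg (Vp R k' eps)) sigma N eta N1 (ltW e0) keps onl comp).
have [s0 _] := app 1%N 1 (leqnn 1) ltr01 (lexx 1).
pose d := 2 * ln 2 - sigma.
have d0 : 0 < d by rewrite /d subr_gt0.
have d4 : 0 <= 4 / d by rewrite divr_ge0 // ltW.
pose B := Num.Def.archi_bound (4 / d).
have hB := archi_boundP d4.
pose N := B.+1.
have N1 : (1 <= N)%N by [].
pose D : R := (2 * N).+1%:R.
have DB : (B%:R : R) <= D by rewrite ler_nat /N; lia.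
have D0 : 0 < D by rewrite ltr0n.
have hq : D^-1 * 4 < d.
  rewrite mulrC ltr_pdivrMr //.
  have : 4 / d < D by apply: lt_le_trans hB DB.
  by rewrite ltr_pdivrMr // mulrC.
pose den := 8 * N%:R * sigma + d.
have den0 : 0 < den.
  rewrite /den addr_gt0 // mulr_gt0 // mulr_gt0 // ltr0n.
pose eta := d / den.
have eta0 : 0 < eta by rewrite divr_gt0.
have eta1 : eta <= 1.
  rewrite ler_pdivrMr // mul1r /den lerDr mulr_ge0 // ?ltW // mulr_ge0 // ler0n.
have etaden : eta * den = d by rewrite divfK // gt_eqF.
have [_ hm] := app N eta N1 eta0 eta1.
have hh := harm R N N1.
move: hm hh hq etaden; rewrite /den -/D.
set S := \sum_(_ <= _ < _) _.
move=> hm hh hq etaden.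
have e1 : 8 * (N%:R * eta * sigma) = d - eta * d.
  by rewrite -{1}etaden; ring.
have e2 : sigma * (1 + 2 * N%:R * eta) = sigma + 2 * (N%:R * eta * sigma) by ring.
rewrite e2 in hm.
have Q0 : 0 <= eta * d by rewrite mulr_ge0 // ltW.
have hd : d = 2 * ln 2 - sigma by [].
move: hm hh hq e1 Q0 hd d0.
set P := N%:R * eta * sigma; set Q := eta * d; set Di := D^-1; set L := ln 2.
move=> *; lra.
Qed.
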